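(* Let $1<p<\infty$ and $\alpha\in\mathbb R$. There is $C>0$ such that for all $N\ge1$, all $A\subset\mathbb Z$ with $|A|\le N$, and all scalars $|\varepsilon_n|\le1$, $$\Big\|\sum_{n\in A}\varepsilon_ne^{inx}\Big\|_{L^p(\log L)^\alpha(\mathbb T)}\le C\max\Big\{N^{1/2},\ N^{1-\frac1p}(\log(e+N))^\alpha\Big\}.$$
   Context: $\mathbb T\equiv[-\pi,\pi)$. $L^p(\log L)^\alpha(\mathbb T)$ is the Orlicz space $L^\Phi$ with $\Phi(t)=\int_0^ts^{p-1}(\log(c+s))^{\alpha p}ds$ ($c>1$ fixed large enough that $\Phi$ is a Young function), with Luxemburg norm $\inf\{\lambda>0:\int_{\mathbb T}\Phi(|f|/\lambda)\le1\}$. *)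

(* Defs.v *)
From HB Require Import structures.
From mathcomp Require Import all_boot all_order all_algebra.
From mathcomp Require Import all_classical all_reals all_analysis.
Set Implicit Arguments. Unset Strict Implicit. Unset Printing Implicit Defensive.
Import Order.TTheory GRing.Theory Num.Theory.
Import numFieldNormedType.Exports.
Local Open Scope classical_set_scope.
Local Open Scope ring_scope.

Definition torus (R : realType) : set R := `[(- pi)%R, pi[%classic.

Definition orliczPhi (R : realType) (p alpha c : R) (t : R) : R :=
  fine (\int[lebesgue_measure]_(s in `[0%R, t])
      (powR s (p - 1) * powR (ln (c + s)) (alpha * p))%:E)%E.

Definition young_function (R : realType) (Phi : R -> R) : Prop :=
  [/\ Phi 0 = 0,
      (forall t, 0 <= t -> 0 <= Phi t),
      (forall s t l, 0 <= s -> 0 <= t -> 0 <= l <= 1 ->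
          Phi (l * s + (1 - l) * t) <= l * Phi s + (1 - l) * Phi t)
    & Phi x @[x --> +oo] --> +oo].

Definition luxemburg_norm (R : realType) (Phi : R -> R) (g : R -> R) : \bar R :=
  ereal_inf [set l%:E | l in [set l : R | 0 < l /\
     (\int[lebesgue_measure]_(x in @torus R) (Phi (`|g x| / l))%:E <= 1)%E]].

(* Modulus of the trigonometric polynomial sum_{n in A} eps_n e^{inx},
   with eps_n = a n + i b n, written out via real and imaginary parts. *)
Definition trig_poly_abs (R : realType) (A : seq int) (a b : int -> R) (x : R) : R :=
  Num.sqrt ((\sum_(n <- A) (a n * cos (n%:~R * x) - b n * sin (n%:~R * x))) ^+ 2
          + (\sum_(n <- A) (a n * sin (n%:~R * x) + b n * cos (n%:~R * x))) ^+ 2).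

(* Main.v *)
Require Import Defs.
From HB Require Import structures.
From mathcomp Require Import all_boot all_order all_algebra.
From mathcomp Require Import all_classical all_reals all_analysis.
Import Order.TTheory GRing.Theory Num.Theory.
Import numFieldNormedType.Exports.
Local Open Scope classical_set_scope.
Local Open Scope ring_scope.

From mathcomp Require Import ring lra.
Set Implicit Arguments. Unset Strict Implicit. Unset Printing Implicit Defensive.

Section S. Variable R : realType.
Local Notation mu := (@lebesgue_measure R).
Lemma FTC_glob (f F : R -> R) (a b : R) : a < b ->
  continuous f -> (forall x : R, is_derive x (1:R) F (f x)) ->
  (\int[mu]_(x in `[a, b]) (f x)%:E = (F b)%:E - (F a)%:E)%E.
Proof.
move=> ab cf dF.
have cF : continuous F.
  move=> x; apply: differentiable_continuous.
  by apply/derivable1_diffP; exact: ex_derive.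
apply: continuous_FTC2 => //.
- exact: continuous_subspaceT.
- split.
  + by move=> x _; exact: ex_derive.
  + exact: (cvg_at_right_filter (cF a)).
  + exact: (cvg_at_left_filter (cF b)).
- by move=> x _; rewrite derive1E; apply: derive_val. Qed.
End S.
Section S2. Variable R : realType.
Local Notation mu := (@lebesgue_measure R).
Lemma is_derive_sinM (k x : R) : is_derive x (1:R) (fun y => sin (k * y)) (cos (k * x) * k).
Proof. apply: (@is_derive1_comp R sin (fun y => k * y)).
by apply: trigger_derive; exact: mulr1. Qed.
Lemma is_derive_cosM (k x : R) : is_derive x (1:R) (fun y => cos (k * y)) (- sin (k * x) * k).
Proof. apply: (@is_derive1_comp R cos (fun y => k * y)).
by apply: trigger_derive; exact: mulr1. Qed.
Lemma sin_natpi (n : nat) : sin (n%:R * pi) = 0 :> R.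
Proof.
elim: n => [|n IH]; first by rewrite mul0r sin0.
by rewrite -addn1 natrD mulrDl mul1r sinDpi IH oppr0.
Qed.
Lemma sin_intpi (z : int) : sin (z%:~R * pi) = 0 :> R.
Proof.
case: z => n; first by rewrite -pmulrn sin_natpi.
by rewrite NegzE mulrNz mulNr sinN -pmulrn sin_natpi oppr0.
Qed.
Lemma cont_cosM (k : R) : continuous (fun y : R => cos (k * y)).
Proof. move=> x; apply: differentiable_continuous.
by apply/derivable1_diffP; exact: (@ex_derive _ _ _ _ _ _ _ (is_derive_cosM k x)). Qed.
Lemma cont_sinM (k : R) : continuous (fun y : R => sin (k * y)).
Proof. move=> x; apply: differentiable_continuous.
by apply/derivable1_diffP; exact: (@ex_derive _ _ _ _ _ _ _ (is_derive_sinM k x)). Qed.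
Lemma int_cosM (z : int) : z != 0 ->
  (\int[mu]_(x in `[(- pi)%R, pi]) (cos (z%:~R * x))%:E = 0)%E.
Proof.
move=> z0; have k0 : (z%:~R : R) != 0 by rewrite intr_eq0.
have ab : - pi < pi :> R by rewrite gtrN // pi_gt0.
have dF : forall x : R, is_derive x (1:R) (fun y => sin (z%:~R * y) / z%:~R) (cos (z%:~R * x)).
  move=> x; have h := is_derive_sinM z%:~R x.
  apply: trigger_derive.
  by rewrite !scaler0 add0r /GRing.scale /= mulrCA mulVf // mulr1.
rewrite (@FTC_glob R _ _ _ _ ab (@cont_cosM _) dF).
by rewrite mulrN sinN sin_intpi oppr0 mul0r subee.
Qed.
Lemma int_sinM (k : R) :
  (\int[mu]_(x in `[(- pi)%R, pi]) (sin (k * x))%:E = 0)%E.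
Proof.
have ab : - pi < pi :> R by rewrite gtrN // pi_gt0.
have [->|k0] := eqVneq k 0.
  under eq_integral do rewrite mul0r sin0.
  by rewrite integral0.
have dF : forall x : R, is_derive x (1:R) (fun y => - cos (k * y) / k) (sin (k * x)).
  move=> x; have h := is_derive_cosM k x.
  apply: trigger_derive.
  by rewrite scaler0 add0r /GRing.scale/= mulNr opprK mulrCA mulVf // mulr1.
rewrite (@FTC_glob R _ _ _ _ ab (@cont_sinM _) dF).
by rewrite mulrN cosN subee.
Qed.
End S2.
Section S3. Variable R : realType.
Local Notation mu := (@lebesgue_measure R).
Lemma cint (f : R -> R) : continuous f ->
  mu.-integrable `[(- pi)%R, pi] (fun x => (f x)%:E).
Proof.
move=> cf; apply: (@continuous_compact_integrable R f).
  exact: segment_compact.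
exact: continuous_subspaceT.
Qed.
Lemma int_one : (\int[mu]_(x in `[(- pi)%R, pi]) (1%:E) = (pi *+ 2)%:E)%E.
Proof.
rewrite integral_cst //= lebesgue_measure_itv /= ifT; last by rewrite lte_fin gtrN // pi_gt0.
by rewrite -EFinD mul1e opprK -mulr2n.
Qed.
Lemma int_term (n m : int) (u v : R) :
  (\int[mu]_(x in `[(- pi)%R, pi]) ((u * cos ((n%:~R - m%:~R) * x) + v * sin ((n%:~R - m%:~R) * x))%:E)
   = (if n == m then u * (pi *+ 2) else 0)%:E)%E.
Proof.
rewrite -intrB.
under eq_integral do rewrite EFinD !EFinM.
rewrite integralD //; last 2 first.
- by apply: integrableZl => //; exact/cint/cont_cosM.
- by apply: integrableZl => //; exact/cint/cont_sinM.
rewrite integralZl //; last exact/cint/cont_cosM.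
rewrite integralZl //; last exact/cint/cont_sinM.
rewrite int_sinM mule0 adde0.
have [->|nm] := eqVneq n m.
  under eq_integral do rewrite subrr mul0r cos0.
  by rewrite int_one.
by rewrite int_cosM ?mule0 // subr_eq0.
Qed.
End S3.
Section S4. Variable R : realType.
Local Notation mu := (@lebesgue_measure R).
Definition S1 (A : seq int) (a b : int -> R) x :=
  \sum_(n <- A) (a n * cos (n%:~R * x) - b n * sin (n%:~R * x)).
Definition S2 (A : seq int) (a b : int -> R) x :=
  \sum_(n <- A) (a n * sin (n%:~R * x) + b n * cos (n%:~R * x)).
Definition term (a b : int -> R) (n m : int) (x : R) :=
  (a n * a m + b n * b m) * cos ((n%:~R - m%:~R) * x) +
  (a n * b m - b n * a m) * sin ((n%:~R - m%:~R) * x).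
Lemma sq_expand A a b x : S1 A a b x ^+ 2 + S2 A a b x ^+ 2 =
  \sum_(n <- A) \sum_(m <- A) term a b n m x.
Proof.
rewrite /S1 /S2 !expr2 !big_distrl /= -big_split /=; apply: eq_bigr => n _.
rewrite !big_distrr /= -big_split /=; apply: eq_bigr => m _.
rewrite /term !mulrBl cosB sinB; ring.
Qed.
End S4.
Section S5. Variable R : realType.
Local Notation mu := (@lebesgue_measure R).
Lemma cont_term (a b : int -> R) n m : continuous (term a b n m).
Proof.
move=> x; rewrite /term; apply: cvgD; apply: cvgM;
  (try exact: cvg_cst); [exact: cont_cosM | exact: cont_sinM].
Qed.
Lemma sum_if (A : seq int) (n : int) (F : int -> R) : uniq A -> n \in A ->
  \sum_(m <- A) (if n == m then F m else 0) = F n.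
Proof.
move=> uA nA; rewrite (bigD1_seq n) //= eqxx big1 ?addr0 // => m mn.
by rewrite eq_sym (negbTE mn).
Qed.
Lemma parseval (A : seq int) (a b : int -> R) : uniq A ->
  (\int[mu]_(x in `[(- pi)%R, pi]) ((S1 A a b x ^+ 2 + S2 A a b x ^+ 2)%:E)
   = (pi *+ 2 * \sum_(n <- A) (a n ^+ 2 + b n ^+ 2))%:E)%E.
Proof.
move=> uA.
under eq_integral => x _.
  rewrite sq_expand -sumEFin.
  under eq_bigr => n _ do rewrite -sumEFin.
  over.
rewrite integral_sum //; last first.
  move=> n; apply: integrable_sum => // m _.
  exact/cint/cont_term.
rewrite (eq_bigr (fun n => \sum_(m <- A) ((if n == m then (a n * a m + b n * b m) * (pi *+ 2) else 0)%:E))%E); last first.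
  move=> n _; rewrite integral_sum //; last by move=> m; exact/cint/cont_term.
  by apply: eq_bigr => m _; rewrite /term int_term.
under eq_bigr do rewrite sumEFin.
rewrite sumEFin; congr (_%:E).
rewrite big_distrr /=; apply: eq_big_seq => n nA.
rewrite (sum_if (fun m => (a n * a m + b n * b m) * (pi *+ 2))) //.
by rewrite mulrC !expr2.
Qed.
End S5.
Section S6. Variable R : realType.
Lemma step2 (x y u v k : R) : 0 <= k -> x ^+ 2 + y ^+ 2 <= k ^+ 2 -> u ^+ 2 + v ^+ 2 <= 1 ->
  (x + u) ^+ 2 + (y + v) ^+ 2 <= (k + 1) ^+ 2.
Proof.
move=> k0 h1 h2.
have h3 : (x * u + y * v) ^+ 2 <= k ^+ 2.
  have e : (x * u + y * v) ^+ 2 + (x * v - y * u) ^+ 2 = (x ^+ 2 + y ^+ 2) * (u ^+ 2 + v ^+ 2) by ring.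
  have : (x * v - y * u) ^+ 2 >= 0 by rewrite sqr_ge0.
  nra.
have h4 : x * u + y * v <= k.
  rewrite -(ger0_norm k0); apply: le_trans (ler_norm _) _.
  by rewrite -ler_sqr ?nnegrE ?normr_ge0 // !real_normK ?num_real.
nra.
Qed.
Lemma ptwise (A : seq int) (a b : int -> R) x :
  (forall n, n \in A -> a n ^+ 2 + b n ^+ 2 <= 1) ->
  S1 A a b x ^+ 2 + S2 A a b x ^+ 2 <= (size A)%:R ^+ 2.
Proof.
elim: A => [|n A IH] H.
  by rewrite /S1 /S2 !big_nil expr0n /= addr0.
have -> : (size (n :: A))%:R = (size A)%:R + 1 :> R by rewrite /= mulrSr.
rewrite /S1 /S2 !big_cons -/(S1 A a b x) -/(S2 A a b x).
rewrite [a n * _ + _ + _]addrC [(a n * sin _ + _) + _]addrC.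
apply: step2 => //.
- by apply: IH => m mA; apply: H; rewrite in_cons mA orbT.
- have := H n (mem_head _ _); have := cos2Dsin2 (n%:~R * x).
  move=> e; have e2 : (a n * cos (n%:~R * x) - b n * sin (n%:~R * x)) ^+ 2 +
      (a n * sin (n%:~R * x) + b n * cos (n%:~R * x)) ^+ 2 =
      (a n ^+ 2 + b n ^+ 2) * (cos (n%:~R * x) ^+ 2 + sin (n%:~R * x) ^+ 2) by ring.
  by rewrite e2 e mulr1.
Qed.
End S6.

Section Q. Variable R : realType.
Implicit Types x y t s : R.
Lemma ln_le_sub1 y : 0 < y -> ln y <= y - 1 :> R.
Proof. move=> y0; have := expR_ge1Dx (ln y); rewrite lnK ?posrE //; lra. Qed.
Lemma ln_div x y : 0 < x -> 0 < y -> ln (x / y) = ln x - ln y :> R.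
Proof. by move=> x0 y0; rewrite lnM ?posrE ?invr_gt0 // lnV ?posrE. Qed.
Lemma ln_mono x y : 0 < x -> x <= y -> ln x <= ln y :> R.
Proof. move=> x0 xy; rewrite ler_ln ?posrE //; exact: lt_le_trans xy. Qed.
Lemma lemQ (c e g : R) : 1 < c -> 0 <= e -> 0 < g -> exists K : R, 0 <= K /\
  forall t s, 0 < t -> t <= s ->
   e * (ln (ln (c + s)) - ln (ln (c + t))) <= K + g * (ln s - ln t).
Proof.
move=> c1 e0 g0.
have lc0 : 0 < ln c by rewrite ln_gt0.
pose eta := g / (e + 1).
have eta0 : 0 < eta by rewrite divr_gt0 // ltr_wpDl.
have ln11 : 0 <= ln (1 + (ln c)^-1) by rewrite ln_ge0 // lerDl invr_ge0 ltW.
exists (e * (ln (1 + (ln c)^-1) + eta + `|ln eta|)); split.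
  by rewrite mulr_ge0 // addr_ge0 ?normr_ge0 // addr_ge0 // ltW.
move=> t s t0 ts.
have s0 : 0 < s by exact: lt_le_trans ts.
set w := ln s - ln t.
have w0 : 0 <= w by rewrite subr_ge0 ln_mono.
have lt0 : 0 < ln (c + t) by rewrite ln_gt0 //; lra.
have ls0 : 0 < ln (c + s) by rewrite ln_gt0 //; lra.
have ltc : ln c <= ln (c + t) by rewrite ln_mono; lra.
have h1 : ln (c + s) <= ln (c + t) + w.
  have -> : ln (c + t) + w = ln ((c + t) * (s / t)).
    by rewrite lnM ?posrE ?divr_gt0 ?addr_gt0 ?(lt_trans _ c1) // ln_div.
  apply: ln_mono; first lra.
  have st1 : 1 <= s / t by rewrite ler_pdivlMr // mul1r.
  have -> : (c + t) * (s / t) = c * (s / t) + s by field; rewrite gt_eqF.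
  nra.
have h2 : ln (ln (c + s)) - ln (ln (c + t)) <= ln (1 + w / ln c).
  rewrite -ln_div //; apply: ln_mono; first exact: divr_gt0.
  rewrite ler_pdivrMr // mulrDl mul1r.
  apply: (le_trans h1); rewrite lerD2l.
  rewrite -mulrA ler_peMr // ler_pdivlMl // mulr1 //.
have h3 : ln (1 + w / ln c) <= ln (1 + (ln c)^-1) + ln (1 + w).
  have i0 : 0 <= (ln c)^-1 by rewrite invr_ge0 ltW.
  have wc0 : 0 <= w / ln c by rewrite divr_ge0 // ltW.
  rewrite -lnM ?posrE; [|lra|lra]; apply: ln_mono; first lra.
  have -> : (1 + (ln c)^-1) * (1 + w) = 1 + w + (ln c)^-1 + w / ln c by rewrite /=; ring.
  nra.
have h4 : ln (1 + w) <= eta * (1 + w) - 1 - ln eta.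
  have := ln_le_sub1 (mulr_gt0 eta0 (ltr_wpDr w0 ltr01)).
  rewrite lnM ?posrE ?ltr_wpDr //; lra.
have h5 : e * eta <= g.
  have e10 : 0 < e + 1 by lra.
  have ee : e / (e + 1) <= 1 by rewrite ler_pdivrMr // mul1r; lra.
  have ee0 : 0 <= e / (e + 1) by rewrite divr_ge0 //; lra.
  have -> : e * eta = g * (e / (e + 1)) by rewrite /eta; field; rewrite gt_eqF.
  nra.
have : ln (ln (c + s)) - ln (ln (c + t)) <= ln (1 + (ln c)^-1) + eta + `|ln eta| + eta * w.
  have : - ln eta <= `|ln eta| by rewrite -normrN ler_norm.
  lra.
move=> h6.
apply: (le_trans (ler_wpM2l e0 h6)); rewrite mulrDr lerD2l -/w mulrA.
by rewrite ler_wpM2r.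
Qed.
End Q.
Section QA. Variable R : realType.
Lemma lemQA (c a g : R) : 1 < c -> 0 < g -> exists K : R, 0 <= K /\
  forall t s, 0 < t -> t <= s ->
   a * (ln (ln (c + t)) - ln (ln (c + s))) <= K + g * (ln s - ln t).
Proof.
move=> c1 g0.
have [a0|a0] := leP 0 a.
  exists 0; split => // t s t0 ts.
  have h1 : ln (ln (c + t)) <= ln (ln (c + s)).
    apply: ln_mono; first by rewrite ln_gt0 //; lra.
    apply: ln_mono; lra.
  have h2 : ln t <= ln s by apply: ln_mono.
  nra.
have na0 : 0 <= - a by lra.
have [K [K0 HK]] := @lemQ R c (- a) g c1 na0 g0.
exists K; split => // t s t0 ts.
have := HK t s t0 ts; lra.
Qed.
End QA.

Section PhiS.
Variables (R : realType) (p alpha c : R).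
Hypotheses (p1 : 1 < p) (c1 : 1 < c) (Y : young_function (orliczPhi p alpha c)).
Local Notation Phi := (orliczPhi p alpha c).
Local Notation mu := (@lebesgue_measure R).
Definition phi (s : R) := powR s (p - 1) * powR (ln (c + s)) (alpha * p).

Lemma Phi_neg t : t < 0 -> Phi t = 0.
Proof.
move=> t0; rewrite /orliczPhi set_itv_ge ?integral_set0 //.
by rewrite bnd_simp -ltNge.
Qed.
Lemma Phi_ge0 t : 0 <= Phi t.
Proof.
case: Y => _ Y2 _ _.
have [t0|t0] := ltP t 0; first by rewrite Phi_neg.
exact: Y2.
Qed.
Lemma Phi_lin s t : 0 <= s -> s <= t -> 0 < t -> Phi s <= (s / t) * Phi t.
Proof.
move=> s0 st t0; case: Y => Y1 _ Y3 _.
have l0 : 0 <= s / t by rewrite divr_ge0 // ltW.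
have l1 : s / t <= 1 by rewrite ler_pdivrMr // mul1r.
have := Y3 t 0 (s / t) (ltW t0) (lexx 0); rewrite l0 l1 => /(_ isT).
by rewrite mulr0 addr0 Y1 mulr0 addr0 divfK ?gt_eqF.
Qed.
Lemma Phi_nd : {homo Phi : x y / x <= y}.
Proof.
move=> x y xy.
have [x0|x0] := ltP x 0; first by rewrite Phi_neg // Phi_ge0.
have [->|yx] := eqVneq y x; first by [].
have xy' : x < y by rewrite lt_neqAle eq_sym yx xy.
have y0 : 0 < y by lra.
apply: (le_trans (Phi_lin x0 xy y0)).
have l1 : x / y <= 1 by rewrite ler_pdivrMr // mul1r.
have := Phi_ge0 y; nra.
Qed.
Lemma mphi : measurable_fun setT phi.
Proof.
apply: measurable_realfun.measurable_funM; first exact: measurable_realfun.measurable_powR.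
apply: (measurableT_comp (measurable_realfun.measurable_powR _)).
apply: (measurableT_comp (@measurable_realfun.measurable_ln R)).
exact: measurable_realfun.measurable_funD.
Qed.
Lemma phi_ge0 s : 0 <= phi s.
Proof. by rewrite mulr_ge0 // powR_ge0. Qed.
Lemma Phi_up s B : 0 <= s -> 0 <= B -> (forall x, 0 <= x <= s -> phi x <= B) ->
  Phi s <= s * B.
Proof.
move=> s0 B0 hB.
have mI : measurable (`[0, s] : set R) by [].
have h1 : (\int[mu]_(x in `[0%R, s%R]) (phi x)%:E <= (s * B)%:E)%E.
  apply: (@le_trans _ _ (\int[mu]_(x in `[0%R, s%R]) (cst B%:E) x)%E).
    apply: ge0_le_integral => //.
    all: try (by move=> x _; rewrite lee_fin phi_ge0).
    apply/measurable_realfun.measurable_EFinP; exact: measurable_funTS mphi.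
  rewrite integral_cst //= lebesgue_measure_itv /=.
  case: ifPn => _; first by rewrite oppr0 adde0 -EFinM mulrC.
  by rewrite mule0 lee_fin mulr_ge0.
have h0 : (0 <= \int[mu]_(x in `[0%R, s%R]) (phi x)%:E)%E.
  by apply: integral_ge0 => x _; rewrite lee_fin phi_ge0.
rewrite /orliczPhi -/phi.
have := @fine_le _ _ ((s * B)%:E) _ _ h1.
apply.
  by rewrite ge0_fin_numE // (le_lt_trans h1) // ltry.
by [].
Qed.
Lemma powR_pos (a x : R) : 0 < a -> powR a x = expR (x * ln a).
Proof. by move=> a0; rewrite /powR gt_eqF. Qed.
Lemma phi_exp s : 0 < s -> phi s = expR ((p - 1) * ln s + alpha * p * ln (ln (c + s))).
Proof.
move=> s0; rewrite /phi !powR_pos // ?expRD //.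
have h : 1 < c + s by have := c1; lra.
exact: ln_gt0 h.
Qed.
Lemma Kphi : exists K : R, forall s, 0 < s ->
  Phi s <= expR (K + p * ln s + alpha * p * ln (ln (c + s))).
Proof.
have g0 : 0 < p - 1 by have := p1; lra.
have [K [K0 HK]] := lemQA (alpha * p) c1 g0.
exists K => s s0.
set B := expR (K + (p - 1) * ln s + alpha * p * ln (ln (c + s))).
have -> : expR (K + p * ln s + alpha * p * ln (ln (c + s))) = s * B.
  have es : expR (ln s) = s by rewrite lnK // posrE.
  transitivity (expR (ln s) * B); last by rewrite es.
  rewrite /B -expRD; congr expR; ring.
apply: Phi_up; first exact: ltW.
  exact: ltW (expR_gt0 _).
move=> x /andP[x0 xs].
have [->|xp] := eqVneq x 0.
  rewrite /phi powR0 ?mul0r; first exact: ltW (expR_gt0 _).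
  by rewrite subr_eq0 gt_eqF.
have x0' : 0 < x by rewrite lt_neqAle eq_sym xp x0.
rewrite phi_exp // /B ler_expR.
have := HK x s x0' xs.
rewrite !mulrBr; have := p1; lra.
Qed.
End PhiS.

Section Core.
Variables (R : realType) (p alpha c dl : R).
Local Notation l s := (ln (ln (c + s))).
Lemma lc_gt0 (s : R) : 1 < c -> 0 <= s -> 0 < ln (c + s).
Proof. move=> c1 s0; have h : 1 < c + s by lra. exact: ln_gt0 h. Qed.
Lemma l_mono (s t : R) : 1 < c -> 0 <= s -> s <= t -> l s <= l t.
Proof.
move=> c1 s0 st; apply: ln_mono; first exact: lc_gt0.
have h1 : 0 < c + s by lra.
have h2 : c + s <= c + t by lra.
exact: ln_mono h1 h2.
Qed.

Lemma caseI : 1 < p -> 1 < c -> 0 < dl -> p < 2 \/ (p <= 2 /\ alpha <= 0) -> exists K : R, forall s : R, dl <= s ->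
  (p - 2) * (ln s - ln dl) + alpha * p * (l s - l dl) <= K.
Proof.
move=> p1 c1 d0 [p2|[p2 a0]].
  have g0 : 0 < 2 - p by lra.
  have [K [K0 HK]] := @lemQA R c (- (alpha * p)) (2 - p) c1 g0.
  exists K => s ds; have := HK dl s d0 ds; lra.
exists 0 => s ds.
have h1 : ln dl <= ln s by apply: ln_mono.
have h2 : l dl <= l s.
  by apply: l_mono; lra.
have h3 : alpha * p <= 0 by nra.
nra.
Qed.

Lemma caseII : 1 < p -> 1 < c -> 2 < p \/ (2 <= p /\ 0 <= alpha) -> exists K : R, forall s t : R, 0 < s -> s <= t ->
  (p - 2) * (ln s - ln t) + alpha * p * (l s - l t) <= K.
Proof.
move=> p1 c1.
have [a0|a0] := leP 0 alpha.
  move=> h; have p2 : 2 <= p by case: h => [|[]//]; lra.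
  exists 0 => s t s0 st.
  have h1 : ln s <= ln t by apply: ln_mono.
  have h2 : l s <= l t.
    by apply: l_mono; lra.
  have h3 : 0 <= alpha * p by nra.
  nra.
move=> [p2|[_ a0']]; last lra.
have g0 : 0 < p - 2 by lra.
have [K [K0 HK]] := @lemQA R c (alpha * p) (p - 2) c1 g0.
exists K => s t s0 st; have := HK s t s0 st; lra.
Qed.
End Core.
Section Core2.
Variable R : realType.
Local Notation l c s := (ln (ln (c + s))).
Lemma lnE1 : ln (expR 1) = 1 :> R. Proof. by rewrite expRK. Qed.
Definition coreP (p alpha c dl A0 X : R) := forall N M : R, 1 <= N -> 0 < M ->
   ln N / 2 <= ln M ->
   (1 - p^-1) * ln N + alpha * ln (ln (expR 1 + N)) <= ln M ->
   forall s : R, dl <= s -> s <= N / (expR X * M) ->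
   (p - 2) * ln s + alpha * p * l c s + 2 * ln (N / (expR X * M)) <= ln N - A0.
Lemma lnT X N M : 1 <= N -> 0 < M -> ln (N / (expR X * M)) = ln N - (X + ln M) :> R.
Proof.
move=> N1 M0; rewrite ln_div ?lnM ?posrE ?expR_gt0 ?expRK //; last by rewrite mulr_gt0 ?expR_gt0.
exact: lt_le_trans ltr01 N1.
Qed.
Lemma coreI (p alpha c dl A0 : R) : 1 < p -> 1 < c -> 0 < dl ->
  p < 2 \/ (p <= 2 /\ alpha <= 0) -> exists X : R, 0 <= X /\ coreP p alpha c dl A0 X.
Proof.
move=> p1 c1 d0 hI.
have [KI HK] := caseI p1 c1 d0 hI.
set D0 := KI + (p - 2) * ln dl + alpha * p * l c dl.
exists (`|D0| + `|A0|); split; first by rewrite addr_ge0.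
move=> N M N1 M0 hM1 hM2 s ds sT.
rewrite lnT //.
have := HK s ds.
have : D0 <= `|D0| by exact: ler_norm.
have : A0 <= `|A0| by exact: ler_norm.
have := normr_ge0 D0; have := normr_ge0 A0.
rewrite /D0 => h0 h0' h1 h2 h3; rewrite !mulrBr in h3; lra.
Qed.
Lemma L_ge1 (N : R) : 0 <= N -> 1 <= ln (expR 1 + N).
Proof.
move=> N0; rewrite -{1}lnE1; apply: ln_mono; first exact: expR_gt0.
by rewrite lerDl.
Qed.
Lemma coreIIa (p alpha c dl A0 : R) : 1 < p -> 1 < c -> 0 < dl ->
  2 <= p -> 0 <= alpha -> exists X : R, 0 <= X /\ coreP p alpha c dl A0 X.
Proof.
move=> p1 c1 d0 p2 a0.
have [KII HK] := caseII p1 c1 (or_intror (conj p2 a0)).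
set Z := KII + alpha * p * ln (1 + ln c) + A0.
exists `|Z|; split => //.
move=> N M N1 M0 hM1 hM2 s ds sT.
set X := `|Z|.
have X0 : 0 <= X := normr_ge0 Z.
have ZX : Z <= X := ler_norm Z.
have N0 : 0 < N by exact: lt_le_trans ltr01 N1.
have T0 : 0 < N / (expR X * M) by rewrite divr_gt0 // mulr_gt0 // expR_gt0.
set T := N / (expR X * M) in sT T0 *.
have lT : ln T = ln N - (X + ln M) by rewrite /T lnT.
have n0 : 0 <= ln N by exact: ln_ge0.
have s0 : 0 < s by exact: lt_le_trans d0 ds.
have := HK s T s0 sT.
set L := ln (expR 1 + N).
have L1 : 1 <= L by exact: L_ge1 (ltW N0).
have Lg0 : 0 <= ln L by exact: ln_ge0.
have lc0 : 0 < ln c by exact: ln_gt0.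
have TN : T <= N.
  rewrite -ler_ln ?posrE // lT; lra.
have h1 : ln (c + T) <= (1 + ln c) * L.
  have e1 : ln (c * (expR 1 + N)) = ln c + L.
    by rewrite lnM ?posrE ?(lt_trans ltr01 c1) // addr_gt0 // expR_gt0.
  have e2 : c + T <= c * (expR 1 + N).
    have : 1 <= expR 1 :> R by rewrite -expR0 ler_expR.
    nra.
  have : ln (c + T) <= ln c + L.
    rewrite -e1; apply: ln_mono e2; lra.
  nra.
have h2 : l c T <= ln (1 + ln c) + ln L.
  rewrite -lnM ?posrE; [|lra|lra].
  apply: ln_mono h1; exact: lc_gt0 (ltW T0).
have h3 : alpha * p * l c T <= alpha * p * (ln (1 + ln c) + ln L).
  by apply: ler_wpM2l => //; nra.
have h4 : p * ln M >= (p - 1) * ln N + alpha * p * ln L.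
  have : p * ((1 - p^-1) * ln N + alpha * ln L) <= p * ln M.
    by apply: ler_wpM2l => //; lra.
  have -> : p * ((1 - p^-1) * ln N + alpha * ln L) = (p - 1) * ln N + alpha * p * ln L.
    by field; rewrite gt_eqF //; lra.
  done.
have h5 : X <= p * X by nra.
rewrite lT => h6.
rewrite !mulrBr in h6 *.
rewrite /Z in ZX.
nra.
Qed.
Lemma coreIIb (p alpha c dl A0 : R) : 1 < p -> 1 < c -> 0 < dl ->
  2 < p -> alpha < 0 -> exists X : R, 0 <= X /\ coreP p alpha c dl A0 X.
Proof.
move=> p1 c1 d0 p2 a0.
have [KII HK] := caseII (alpha := alpha) p1 c1 (or_introl p2).
have lc0 : 0 < ln c by exact: ln_gt0.
set m := p + ln (expR 1 + 1) / ln c.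
have le0 : 0 <= ln (expR 1 + 1) :> R.
  apply: ln_ge0; have : 0 < expR 1 :> R by exact: expR_gt0.
  lra.
have m0 : 0 < m.
  have : 0 <= ln (expR 1 + 1) / ln c by rewrite divr_ge0 // ltW.
  rewrite /m; lra.
set Z := KII - alpha * p * ln m + A0.
exists `|Z|; split => //.
move=> N M N1 M0 hM1 hM2 s ds sT.
set X := `|Z|.
have X0 : 0 <= X := normr_ge0 Z.
have ZX : Z <= X := ler_norm Z.
have N0 : 0 < N by exact: lt_le_trans ltr01 N1.
have T0 : 0 < N / (expR X * M) by rewrite divr_gt0 // mulr_gt0 // expR_gt0.
set T := N / (expR X * M) in sT T0 *.
have lT : ln T = ln N - (X + ln M) by rewrite /T lnT.
have n0 : 0 <= ln N by exact: ln_ge0.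
have s0 : 0 < s by exact: lt_le_trans d0 ds.
set L := ln (expR 1 + N).
have L1 : 1 <= L by exact: L_ge1 (ltW N0).
have Lg0 : 0 <= ln L by exact: ln_ge0.
set Ts := expR (ln N / p - alpha * ln L).
have lTs : ln Ts = ln N / p - alpha * ln L by rewrite expRK.
have Ts0 : 0 < Ts by exact: expR_gt0.
have eM : (1 - p^-1) * ln N = ln N - ln N / p by rewrite mulrBl mul1r mulrC.
have lTT : ln T <= ln Ts - X by rewrite lT lTs; lra.
have TTs : T <= Ts by rewrite -ler_ln ?posrE //; lra.
have := HK s Ts s0 (le_trans sT TTs).
have cl : ln L - ln m <= l c Ts.
  have h1 : ln Ts <= ln (c + Ts) by apply: ln_mono => //; lra.
  have h1' : ln c <= ln (c + Ts) by apply: ln_mono; lra.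
  have e0 : 0 < expR 1 :> R by exact: expR_gt0.
  have h2 : L <= ln N + ln (expR 1 + 1).
    rewrite -lnM ?posrE; [|lra|lra].
    apply: ln_mono; first lra.
    nra.
  have h3 : L <= m * ln (c + Ts).
    have ha : ln N <= p * ln (c + Ts).
      have : ln N / p - alpha * ln L >= ln N / p by nra.
      have -> : ln N = p * (ln N / p) by field; rewrite gt_eqF //; lra.
      move=> hh; apply: ler_wpM2l; lra.
    have hb : ln (expR 1 + 1) <= ln (expR 1 + 1) / ln c * ln (c + Ts).
      rewrite -mulrA ler_peMr //.
      by rewrite ler_pdivlMl // mulr1.
    rewrite /m mulrDl; lra.
  have lcT : 0 < ln (c + Ts) by apply: lc_gt0 => //; exact: ltW.
  have L0 : 0 < L by exact: lt_le_trans ltr01 L1.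
  rewrite -(ln_div L0 m0); apply: ln_mono.
    exact: divr_gt0 L0 m0.
  by rewrite ler_pdivrMr // mulrC.
have h4 : alpha * p * l c Ts <= alpha * p * (ln L - ln m).
  by apply: ler_wnM2l => //; nra.
have h5 : p * (ln N / p) = ln N by field; rewrite gt_eqF //; lra.
rewrite lTs => h6.
rewrite !mulrBr in h6 *.
rewrite lT.
rewrite /Z in ZX.
have e7 : (p - 2) * (ln N / p) = ln N - 2 * (ln N / p) by rewrite mulrBl h5.
rewrite e7 in h6.
nra.
Qed.
Lemma core (p alpha c dl A0 : R) : 1 < p -> 1 < c -> 0 < dl ->
  exists X : R, 0 <= X /\ coreP p alpha c dl A0 X.
Proof.
move=> p1 c1 d0.
have [p2|p2] := ltP p 2; first by apply: coreI => //; left.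
have [a0|a0] := leP 0 alpha; first exact: coreIIa.
have [p2'|p2'] := ltP 2 p; first exact: coreIIb.
apply: coreI => //; right; split => //; exact: ltW.
Qed.
End Core2.

Section G. Variable R : realType.
Lemma cont_sum (A : seq int) (F : int -> R -> R) :
  (forall n, continuous (F n)) -> continuous (fun x => \sum_(n <- A) F n x).
Proof.
move=> cF x; elim: A => [|n A IH].
  have -> : (fun x => \sum_(n <- [::]) F n x) = (fun=> 0) by apply: funext => y; rewrite big_nil.
  exact: cvg_cst.
have -> : (fun x => \sum_(m <- n :: A) F m x) = (fun x => F n x + \sum_(m <- A) F m x).
  by apply: funext => y; rewrite big_cons.
apply: cvgD => //; exact: cF.
Qed.
Lemma cont_S1 (A : seq int) (a b : int -> R) : continuous (S1 A a b).
Proof.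
apply: cont_sum => n x; apply: cvgB; apply: cvgM; (try exact: cvg_cst);
  [exact: cont_cosM | exact: cont_sinM].
Qed.
Lemma cont_S2 (A : seq int) (a b : int -> R) : continuous (S2 A a b).
Proof.
apply: cont_sum => n x; apply: cvgD; apply: cvgM; (try exact: cvg_cst);
  [exact: cont_sinM | exact: cont_cosM].
Qed.
Lemma gE (A : seq int) (a b : int -> R) x :
  trig_poly_abs A a b x = Num.sqrt (S1 A a b x ^+ 2 + S2 A a b x ^+ 2).
Proof. by []. Qed.
Lemma cont_g (A : seq int) (a b : int -> R) : continuous (trig_poly_abs A a b).
Proof.
move=> x; rewrite /continuous_at.
have h : continuous (fun x => S1 A a b x ^+ 2 + S2 A a b x ^+ 2).
  move=> y; apply: cvgD; apply: cvgM; (try exact: cont_S1); exact: cont_S2.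
exact: (continuous_comp (h x) (@sqrt_continuous R _)).
Qed.
Lemma g_ge0 (A : seq int) (a b : int -> R) x : 0 <= trig_poly_abs A a b x.
Proof. exact: sqrtr_ge0. Qed.
Lemma g_sq (A : seq int) (a b : int -> R) x :
  trig_poly_abs A a b x ^+ 2 = S1 A a b x ^+ 2 + S2 A a b x ^+ 2.
Proof. by rewrite gE sqr_sqrtr // addr_ge0 // sqr_ge0. Qed.
Lemma g_le (A : seq int) (a b : int -> R) x :
  (forall n, n \in A -> a n ^+ 2 + b n ^+ 2 <= 1) ->
  trig_poly_abs A a b x <= (size A)%:R.
Proof.
move=> h; rewrite -(ler_pXn2r (n := 2)) ?nnegrE ?g_ge0 ?ler0n //.
by rewrite g_sq; exact: ptwise.
Qed.
Lemma sum_ab (A : seq int) (a b : int -> R) :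
  (forall n, n \in A -> a n ^+ 2 + b n ^+ 2 <= 1) ->
  \sum_(n <- A) (a n ^+ 2 + b n ^+ 2) <= (size A)%:R.
Proof.
elim: A => [|n A IH] h; first by rewrite big_nil.
rewrite big_cons /= mulrSr addrC lerD //; last exact: h (mem_head _ _).
by apply: IH => m mA; apply: h; rewrite in_cons mA orbT.
Qed.
End G.

Unset Implicit Arguments.
Theorem lemma5p2 (R : realType) (p alpha c : R) :
  1 < p -> 1 < c -> young_function (orliczPhi p alpha c) ->
  exists C : R, 0 < C /\
    forall (N : nat) (A : seq int) (a b : int -> R),
      (1 <= N)%N -> uniq A -> (size A <= N)%N ->
      (forall n, n \in A -> a n ^+ 2 + b n ^+ 2 <= 1) ->
      (luxemburg_norm (orliczPhi p alpha c) (trig_poly_abs A a b)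
        <= (C * Num.max (powR (N%:R) (2^-1))
                  (powR (N%:R) (1 - p^-1) * powR (ln (expR 1 + N%:R)) alpha))%:E)%E.
Proof.
move=> p1 c1 Y.
have [Kf HKf] := Kphi alpha p1 c1.
set Phi := orliczPhi p alpha c in Y HKf *.
have pi0 : 0 < pi :> R by exact: pi_gt0.
set pi4 : R := 4 * pi.
have pi40 : 0 < pi4 by rewrite /pi4 mulr_gt0.
have P10 : 0 <= Phi 1 := Phi_ge0 Y 1.
set dl := (pi4 * (Phi 1 + 1))^-1.
have dl0 : 0 < dl by rewrite invr_gt0 mulr_gt0 //; lra.
set A0 := ln pi4 + Kf.
have [X [X0 HX]] := core alpha A0 p1 c1 dl0.
exists (expR X); split; first exact: expR_gt0.
move=> N A a b N1 uA sA hab.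
set Nr : R := N%:R.
have N1r : 1 <= Nr by rewrite /Nr ler1n.
have Nr0 : 0 < Nr by exact: lt_le_trans ltr01 N1r.
set L := ln (expR 1 + Nr).
have L1 : 1 <= L := L_ge1 (ltW Nr0).
have L0 : 0 < L by exact: lt_le_trans ltr01 L1.
set M1 := powR Nr (2^-1).
set M2 := powR Nr (1 - p^-1) * powR L alpha.
have M10 : 0 < M1 by exact: powR_gt0.
have M20 : 0 < M2 by rewrite mulr_gt0 // powR_gt0.
set M := Num.max M1 M2.
have M1M : M1 <= M by rewrite le_max lexx.
have M2M : M2 <= M by rewrite le_max lexx orbT.
have M0 : 0 < M by exact: lt_le_trans M10 M1M.
have hM1 : ln Nr / 2 <= ln M.
  have := ln_mono M10 M1M; rewrite /M1 ln_powR mulrC.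
  by [].
have hM2 : (1 - p^-1) * ln Nr + alpha * ln L <= ln M.
  have := ln_mono M20 M2M; rewrite /M2 lnM ?posrE ?powR_gt0 // !ln_powR.
  by [].
set lam := expR X * M.
have lam0 : 0 < lam by rewrite mulr_gt0 // expR_gt0.
rewrite /luxemburg_norm; apply: ereal_inf_lbound; exists lam => //; split => //.
set g := trig_poly_abs A a b.
have gle x : g x <= Nr.
  apply: (le_trans (g_le x hab)); by rewrite /Nr ler_nat.
have key x : Phi (g x / lam) <= Phi dl + g x ^+ 2 / (pi4 * Nr).
  set u := g x / lam.
  have gx0 : 0 <= g x := g_ge0 A a b x.
  have u0 : 0 <= u by rewrite divr_ge0 // ltW.
  have t0 : 0 <= g x ^+ 2 / (pi4 * Nr) by rewrite divr_ge0 ?sqr_ge0 // ltW // mulr_gt0.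
  have [ud|ud] := leP u dl.
    by apply: (le_trans (Phi_nd Y ud)); rewrite lerDl.
  have u0' : 0 < u by exact: lt_trans dl0 ud.
  have gu : g x = u * lam by rewrite /u divfK // gt_eqF.
  have g0 : 0 < g x by rewrite gu mulr_gt0.
  have uT : u <= Nr / (expR X * M) by rewrite /u ler_wpM2r // invr_ge0 ltW.
  have h1 := HX Nr M N1r M0 hM1 hM2 u (ltW ud) uT.
  have h2 := HKf u u0'.
  have e1 : ln u = ln (g x) - ln lam by rewrite /u ln_div.
  have e2 : ln (Nr / (expR X * M)) = ln Nr - ln lam by rewrite ln_div.
  have y0 : 0 < g x ^+ 2 / (pi4 * Nr) by rewrite divr_gt0 ?exprn_gt0 // mulr_gt0.
  have e3 : ln (g x ^+ 2 / (pi4 * Nr)) = 2 * ln (g x) - (ln pi4 + ln Nr).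
    rewrite ln_div ?exprn_gt0 ?mulr_gt0 // lnXn // lnM ?posrE //.
    by rewrite mulr_natl.
  apply: (le_trans h2); apply: (@le_trans _ _ (g x ^+ 2 / (pi4 * Nr))); last by rewrite lerDr; exact: Phi_ge0 Y dl.
  rewrite -[in X in _ <= X](lnK (x := g x ^+ 2 / (pi4 * Nr))) ?posrE // ler_expR e3.
  rewrite e2 e1 in h1; rewrite e1.
  rewrite /A0 in h1.
  rewrite !mulrBl in h1.
  lra.
have cgl : continuous (fun x => g x / lam).
  move=> x; apply: cvgM; [exact: cont_g | exact: cvg_cst].
have cS : continuous (fun x => S1 A a b x ^+ 2 + S2 A a b x ^+ 2).
  move=> y; apply: cvgD; apply: cvgM; (try exact: cont_S1); exact: cont_S2.
have cf2 : continuous (fun x => Phi dl + g x ^+ 2 / (pi4 * Nr)).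
  move=> y; apply: cvgD; first exact: cvg_cst.
  apply: cvgM; last exact: cvg_cst.
  apply: cvgM; exact: cont_g.
have mT : measurable (@torus R) by rewrite /torus; exact: measurable_itv.
have -> : (\int[lebesgue_measure]_(x in @torus R) (Phi (`|g x| / lam))%:E =
    \int[lebesgue_measure]_(x in @torus R) (Phi (g x / lam))%:E)%E.
  by apply: eq_integral => x _; rewrite ger0_norm // g_ge0.
apply: (@le_trans _ _ (\int[lebesgue_measure]_(x in @torus R) ((Phi dl + g x ^+ 2 / (pi4 * Nr))%:E))%E).
  apply: ge0_le_integral => //.
  - by move=> x _; rewrite lee_fin; exact: Phi_ge0.
  - apply/measurable_realfun.measurable_EFinP.
    apply: (measurableT_comp (measurable_realfun.nondecreasing_measurable _ (Phi_nd Y))) => //.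
    exact: measurable_funTS (measurable_realfun.continuous_measurable_fun cgl).
  - apply/measurable_realfun.measurable_EFinP.
    exact: measurable_funTS (measurable_realfun.continuous_measurable_fun cf2).
  - by move=> x _; rewrite lee_fin key.
rewrite /torus integral_itv_bndo_bndc; last first.
  apply/measurable_realfun.measurable_EFinP.
  exact: measurable_funTS (measurable_realfun.continuous_measurable_fun cf2).
have -> : (\int[lebesgue_measure]_(x in `[(- pi)%R, pi]) (Phi dl + g x ^+ 2 / (pi4 * Nr))%:E =
  \int[lebesgue_measure]_(x in `[(- pi)%R, pi]) ((Phi dl)%:E + ((pi4 * Nr)^-1)%:E *
     (S1 A a b x ^+ 2 + S2 A a b x ^+ 2)%:E))%E.
  by apply: eq_integral => x _; rewrite g_sq -EFinM -EFinD mulrC.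
rewrite integralD //; last 2 first.
- exact: (@cint R (fun=> Phi dl) (fun x => cvg_cst _)).
- apply: integrableZl => //; exact: cint cS.
rewrite integralZl //; last exact: cint cS.
rewrite parseval //.
rewrite integral_cst //= lebesgue_measure_itv /= ifT; last by rewrite lte_fin gtrN.
rewrite opprK -EFinD lee_fin.
have hS : \sum_(n <- A) (a n ^+ 2 + b n ^+ 2) <= Nr.
  apply: (le_trans (sum_ab hab)); by rewrite /Nr ler_nat.
have pi2 : 2 <= pi :> R by exact: pi_ge2.
have q0 : 0 < pi4 * (Phi 1 + 1) by rewrite mulr_gt0 //; lra.
have q1 : 1 <= pi4 * (Phi 1 + 1) by rewrite /pi4; nra.
have dl1 : dl <= 1 by rewrite /dl invr_le1 // ?unitfE ?gt_eqF.
have hP : Phi dl <= dl * Phi 1.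
  by have := Phi_lin Y (ltW dl0) dl1 ltr01; rewrite divr1.
have h1 : Phi dl * (pi + pi) <= dl * Phi 1 * (pi + pi) by rewrite ler_wpM2r //; lra.
have e2 : dl * Phi 1 * (pi + pi) = Phi 1 / (2 * (Phi 1 + 1)).
  by rewrite /dl /pi4; field; rewrite ?gt_eqF //; lra.
have e3 : Phi 1 / (2 * (Phi 1 + 1)) <= 1 / 2.
  rewrite ler_pdivrMr; last lra.
  lra.
have h2 : (pi4 * Nr)^-1 * (pi *+ 2 * \sum_(n <- A) (a n ^+ 2 + b n ^+ 2)) <=
   (pi4 * Nr)^-1 * (pi *+ 2 * Nr).
  apply: ler_wpM2l; first by rewrite invr_ge0 mulr_ge0 // ltW.
  apply: ler_wpM2l => //; by rewrite mulrn_wge0 // ltW.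
have e1 : (pi4 * Nr)^-1 * (pi *+ 2 * Nr) = 1 / 2.
  rewrite /pi4 mulr2n; field; rewrite ?gt_eqF //; lra.
lra.
Qed.
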